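(* For every integer $n\ge 3$, $|\mathfrak D^1_{2n}(123)|=4$.
   Context: A Dumont permutation of the first kind of length $2n$ is a permutation $\pi\in\mathfrak S_{2n}$ such that for every $i=1,\dots,2n$: if $\pi(i)$ is even then $i<2n$ and $\pi(i)>\pi(i+1)$; if $\pi(i)$ is odd then $i=2n$ or $\pi(i)<\pi(i+1)$. $\mathfrak D^1_{2n}$ denotes the set of these. A permutation $\sigma$ contains a pattern $\tau\in\mathfrak S_k$ if some subsequence $(\sigma(i_1),\dots,\sigma(i_k))$, $i_1<\dots<i_k$, is order-isomorphic to $\tau$; otherwise $\sigma$ avoids $\tau$. $\mathfrak D^1_{2n}(T)$ denotes the set of permutations in $\mathfrak D^1_{2n}$ avoiding every pattern in $T$. *)

(* Defs.v *)
(* Permutations of {1..N} are modelled as s : 'S_N acting on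
   'I_N = {0..N-1}; the value pi(i) (1-based) is (s i).+1. *)
From mathcomp Require Import all_boot all_order all_fingroup.
Set Implicit Arguments. Unset Strict Implicit. Unset Printing Implicit Defensive.

Definition word (N : nat) (s : 'S_N) : seq nat := [seq (s i).+1 | i <- enum 'I_N].

Definition dumont1 (N : nat) (s : 'S_N) : bool :=
  let w := nth 0 (word s) in
  [forall i : 'I_N,
     if ~~ odd (w i) then (i.+1 < N) && (w i.+1 < w i)
     else (i.+1 == N) || (w i < w i.+1)].

Definition contains (N k : nat) (s : 'S_N) (t : 'S_k) : bool :=
  [exists f : {ffun 'I_k -> 'I_N},
     [forall i : 'I_k, forall j : 'I_k, (i < j) ==> (f i < f j)] &&
     [forall i : 'I_k, forall j : 'I_k, (s (f i) < s (f j)) == (t i < t j)]].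

Definition avoids (N k : nat) (s : 'S_N) (t : 'S_k) : bool := ~~ contains s t.

Definition pat123 : 'S_3 := 1%g.

Definition D1_avoid123 (n : nat) : {set 'S_(2 * n)} :=
  [set s : 'S_(2 * n) | dumont1 s && avoids s pat123].

(* Main.v *)
Require Import Defs.
From mathcomp Require Import all_boot all_order all_fingroup.
From mathcomp Require Import zify.
Set Implicit Arguments. Unset Strict Implicit. Unset Printing Implicit Defensive.

Definition dcond (w : seq nat) N (i : nat) : bool :=
  if ~~ odd (nth 0 w i) then (i.+1 < N) && (nth 0 w i.+1 < nth 0 w i)
  else (i.+1 == N) || (nth 0 w i < nth 0 w i.+1).
Definition dumB N w := all (dcond w N) (iota 0 N).
Definition avB N (w : seq nat) := ~~ has (fun i => has (fun j => has (fun k =>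
  [&& i < j, j < k, nth 0 w i < nth 0 w j & nth 0 w j < nth 0 w k]) (iota 0 N)) (iota 0 N)) (iota 0 N).
Definition valid N w := [&& perm_eq w (iota 1 N), dumB N w & avB N w].
Definition base4 : seq (seq nat) := [:: [:: 4;3;6;2;1;5]; [:: 5;6;2;1;4;3]; [:: 5;6;3;4;2;1]; [:: 5;6;4;2;1;3]].

Lemma base_ok : all (fun w => valid 6 w == (w \in base4)) (permutations (iota 1 6)).
Proof. vm_compute. reflexivity. Qed.
Lemma base_perm : all (fun w => perm_eq w (iota 1 6)) base4.
Proof. vm_compute. reflexivity. Qed.

Lemma dumBP N w : reflect (forall i, i < N -> dcond w N i) (dumB N w).
Proof.
apply: (iffP allP) => H i.
- by move=> Hi; apply: H; rewrite mem_iota.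
- by rewrite mem_iota => /andP[_ Hi]; apply: H.
Qed.

Lemma avBP N w : reflect (forall i j k, i < j -> j < k -> k < N ->
   nth 0 w i < nth 0 w j -> nth 0 w j < nth 0 w k -> False) (avB N w).
Proof.
apply: (iffP idP).
- move=> H i j k ij jk kN a b.
  move/hasPn: H => /(_ i); rewrite mem_iota => /(_ ltac:(lia)) /hasPn /(_ j).
  rewrite mem_iota => /(_ ltac:(lia)) /hasPn /(_ k).
  by rewrite mem_iota => /(_ ltac:(lia)); rewrite ij jk a b.
- move=> H; apply/hasPn => i; rewrite mem_iota => /andP[_ Hi].
  apply/hasPn => j; rewrite mem_iota => /andP[_ Hj].
  apply/hasPn => k; rewrite mem_iota => /andP[_ Hk].
  apply/negP => /and4P[a b c d]; exact: (H i j k).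
Qed.

Section PermFacts.
Variables (N : nat) (w : seq nat).
Hypothesis hp : perm_eq w (iota 1 N).
Lemma pf_size : size w = N.
Proof. by rewrite (perm_size hp) size_iota. Qed.
Lemma pf_uniq : uniq w.
Proof. by rewrite (perm_uniq hp) iota_uniq. Qed.
Lemma pf_mem x : (x \in w) = (0 < x) && (x <= N).
Proof. rewrite (perm_mem hp) mem_iota; apply/idP/idP; lia. Qed.
Lemma pf_bnd i : nth 0 w i <= N.
Proof.
case: (ltnP i (size w)) => hi; last by rewrite nth_default.
by move: (mem_nth 0 hi); rewrite pf_mem => /andP[].
Qed.
Lemma pf_pos i : i < N -> 0 < nth 0 w i.
Proof.
move=> hi; have : i < size w by rewrite pf_size.
by move=> /(mem_nth 0); rewrite pf_mem => /andP[].
Qed.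
Lemma pf_inj i j : i < N -> j < N -> nth 0 w i = nth 0 w j -> i = j.
Proof.
move=> hi hj e; apply/eqP; rewrite -(nth_uniq 0 _ _ pf_uniq) ?pf_size //.
by rewrite e.
Qed.
End PermFacts.

Lemma perm_cons2 M w : perm_eq [:: M.+1, M.+2 & w] (iota 1 M.+2) = perm_eq w (iota 1 M).
Proof.
have E : perm_eq (iota 1 M.+2) ([:: M.+1; M.+2] ++ iota 1 M).
  have -> : iota 1 M.+2 = iota 1 M ++ iota (1 + M) 2 by rewrite -iotaD addn2.
  by rewrite perm_catC add1n.
by rewrite (permPr E) -[[:: M.+1, M.+2 & w]]/([:: M.+1; M.+2] ++ w) perm_cat2l.
Qed.

Lemma cons2_valid M w : 2 <= M -> ~~ odd M ->
  valid M.+2 [:: M.+1, M.+2 & w] = valid M w.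
Proof.
move=> hM hev; rewrite /valid perm_cons2.
case hp: (perm_eq w (iota 1 M)) => //=.
have hb := pf_bnd hp.
have hpos := pf_pos hp.
congr andb.
- apply/dumBP/dumBP => H i hi.
  + have := H i.+2 ltac:(lia); rewrite /dcond /=.
    have -> : (i.+3 < M.+2) = (i.+1 < M) by apply/idP/idP; lia.
    have -> : (i.+3 == M.+2) = (i.+1 == M) by apply/eqP/eqP; lia.
    by [].
  + case: i hi => [|[|i]] hi.
    * rewrite /dcond /= hev /=; lia.
    * rewrite /dcond /= (negbTE hev) /=.
      have := hb 0; have := hpos 0 ltac:(lia).
      lia.
    * have := H i ltac:(lia); rewrite /dcond /=.
      have -> : (i.+3 < M.+2) = (i.+1 < M) by apply/idP/idP; lia.
      have -> : (i.+3 == M.+2) = (i.+1 == M) by apply/eqP/eqP; lia.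
      by [].
- apply/avBP/avBP => H i j k ij jk kN a b.
  + exact: (H i.+2 j.+2 k.+2).
  + case: i ij a => [|[|i]] ij a.
    * case: j jk ij a b => [|[|j]] //= jk ij a b.
      - case: k kN jk b => [|[|k]] //= kN jk b; try lia; have := hb k; lia.
      - have := hb j; lia.
    * case: j jk ij a b => [|[|j]] //= jk ij a b; try lia; have := hb j; lia.
    * case: j jk ij a b => [|[|j]] //= jk ij a b; try lia.
      case: k kN jk b => [|[|k]] //= kN jk b; try lia.
      exact: (H i j k).
Qed.

Lemma fwd M w : 6 <= M -> ~~ odd M -> valid M.+2 w ->
  exists w', w = [:: M.+1, M.+2 & w'].
Proof.
move=> hM hev /and3P[hp /dumBP hd /avBP ha].
have hs := pf_size hp; have hb := pf_bnd hp; have hpos := pf_pos hp.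
have hinj := pf_inj hp.
have hin : forall v, 0 < v <= M.+2 -> exists2 q, q < M.+2 & nth 0 w q = v.
  move=> v hv; exists (index v w).
    by rewrite -hs index_mem (pf_mem hp).
  by rewrite nth_index // (pf_mem hp).
have [p hpN hWp] := hin M.+1 ltac:(lia).
have hodd : odd M.+1 by rewrite /= hev.
have := hd p hpN; rewrite /dcond hWp hodd /=.
case/orP => [/eqP hpe | hlt].
-
  have key : forall v, odd v -> 0 < v < M.+1 -> exists q, [/\ q < M.+2, nth 0 w q = v &
        (q = M \/ nth 0 w q.+1 = M.+2)].
    move=> v ov hv; have [q hq hWq] := hin v ltac:(lia).
    exists q; split => //.
    have hqp : q <> p by move=> e; move: hWq; rewrite e hWp; lia.
    have := hd q hq; rewrite /dcond hWq ov /=.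
    case/orP => [/eqP e | hlt]; first by exfalso; apply: hqp; lia.
    case: (eqVneq q M) => [-> | hqM]; [by left | right].
    have hb1 := hb q.+1.
    case: (eqVneq (nth 0 w q.+1) M.+2) => // hne.
    have hne2 : nth 0 w q.+1 <> M.+1.
      move=> e; have := hinj q.+1 p ltac:(lia) hpN; rewrite e hWp; lia.
    exfalso; apply: (ha q q.+1 p); rewrite ?hWq ?hWp; lia.
  have [q1 [h1 e1 o1]] := key 1 isT ltac:(lia).
  have [q3 [h3 e3 o3]] := key 3 isT ltac:(lia).
  have [q5 [h5 e5 o5]] := key 5 isT ltac:(lia).
  have d13 : q1 <> q3 by move=> e; move: e1; rewrite e e3.
  have d15 : q1 <> q5 by move=> e; move: e1; rewrite e e5.
  have d35 : q3 <> q5 by move=> e; move: e3; rewrite e e5.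
  have U : forall a b, a < M.+2 -> b < M.+2 -> a < M.+1 -> b < M.+1 ->
      nth 0 w a.+1 = M.+2 -> nth 0 w b.+1 = M.+2 -> a = b.
    move=> a b ha' hb' ha1 hb1 ea eb.
    have : a.+1 = b.+1 by apply: hinj; rewrite ?ea ?eb //; lia.
    by case.
  have hq1 : q1 < M.+1 by case: o1 => [->|e]; [lia| case: (ltnP q1 M.+1) => // hge; move: e; rewrite nth_default ?hs //; lia].
  have hq3 : q3 < M.+1 by case: o3 => [->|e]; [lia| case: (ltnP q3 M.+1) => // hge; move: e; rewrite nth_default ?hs //; lia].
  have hq5 : q5 < M.+1 by case: o5 => [->|e]; [lia| case: (ltnP q5 M.+1) => // hge; move: e; rewrite nth_default ?hs //; lia].
  exfalso.
  case: o1 => o1; case: o3 => o3; case: o5 => o5; try lia.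
  + by apply: d35; apply: U.
  + by apply: d15; apply: U.
  + by apply: d13; apply: U.
  + by apply: d13; apply: U.
- have hp1 : p.+1 < M.+2.
    case: (ltnP p.+1 M.+2) => // hge; move: hlt; rewrite nth_default ?hs //.
  have hW1 : nth 0 w p.+1 = M.+2 by have := hb p.+1; lia.
  have hp0 : p = 0.
    case: p hpN hWp hlt hp1 hW1 => // p hpN hWp hlt hp1 hW1.
    have n0p : nth 0 w 0 <> M.+1 by move=> e; have := hinj 0 p.+1 ltac:(lia) hpN; rewrite e hWp; lia.
    have n0q : nth 0 w 0 <> M.+2 by move=> e; have := hinj 0 p.+2 ltac:(lia) hp1; rewrite e hW1; lia.
    exfalso; apply: (ha 0 p.+1 p.+2); rewrite ?hWp ?hW1; try lia.
    have := hb 0; lia.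
  move: hWp hW1; rewrite hp0; move: hs.
  case: w {hp hd ha hb hpos hinj hin hpN hlt hp1 hp0} => [|a [|b w']] //= _ -> ->.
  by exists w'.
Qed.

Fixpoint Lr k : seq (seq nat) :=
  if k is k'.+1 then map (fun t => [:: ((k' + 3).*2).+1, ((k' + 3).*2).+2 & t]) (Lr k')
  else base4.

Lemma Lr_size k : size (Lr k) = 4.
Proof. by elim: k => //= k IH; rewrite size_map. Qed.

Lemma Lr_uniq k : uniq (Lr k).
Proof.
elim: k => [|k IH] /=; first by vm_compute.
by rewrite map_inj_uniq // => x y [].
Qed.

Lemma Lr_spec k w : valid (k + 3).*2 w = (w \in Lr k).
Proof.
elim: k w => [|k IH] w.
- rewrite /=; case hp: (perm_eq w (iota 1 6)).
  + by apply/eqP; apply: (allP base_ok); rewrite mem_permutations.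
  + rewrite /valid hp /=; apply/esym/negP => /(allP base_perm); by rewrite hp.
- have hM : 6 <= (k + 3).*2 by rewrite -muln2; lia.
  have hev : ~~ odd (k + 3).*2 by rewrite odd_double.
  have h2 : 2 <= (k + 3).*2 by lia.
  rewrite addSn doubleS /=; apply/idP/idP.
  + move=> hv; have [w' ew] := fwd hM hev hv.
    move: hv; rewrite ew cons2_valid // IH.
    by move=> h; apply: map_f.
  + by case/mapP => t ht ->; rewrite cons2_valid // IH.
Qed.

Lemma word_nth N (s : 'S_N) (i : 'I_N) : nth 0 (word s) i = (s i).+1.
Proof. by rewrite /word (nth_map i) ?size_enum_ord // nth_ord_enum. Qed.

Lemma size_word N (s : 'S_N) : size (word s) = N.
Proof. by rewrite /word size_map size_enum_ord. Qed.

Lemma word_inj N : injective (@word N).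
Proof.
move=> s t e; apply/permP => i; apply/val_inj.
by have := congr1 (fun x => nth 0 x i) e; rewrite /= !word_nth => [[]].
Qed.

Lemma word_perm N (s : 'S_N) : perm_eq (word s) (iota 1 N).
Proof.
have -> : iota 1 N = map (fun i : 'I_N => (val i).+1) (enum 'I_N).
  by rewrite -add1n iotaDl -val_enum_ord -map_comp; apply: eq_map => i /=; rewrite add1n.
have -> : word s = map (fun i : 'I_N => (val i).+1) (map s (enum 'I_N)).
  by rewrite /word; elim: (enum _) => //= a l ->.
apply: (perm_map (fun i : 'I_N => (val i).+1)); apply: uniq_perm.
- rewrite map_inj_uniq ?enum_uniq //; exact: perm_inj.
- exact: enum_uniq.
move=> x; rewrite mem_enum; apply/mapP; exists ((s^-1)%g x); rewrite ?mem_enum //.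
by rewrite permKV.
Qed.

Lemma word_surj N w : perm_eq w (iota 1 N) -> exists s : 'S_N, word s = w.
Proof.
case: N w => [|N] w hp.
  exists 1%g; have := pf_size hp; case: w {hp} => // _.
  by apply/eqP; rewrite -size_eq0 size_word.
have hs := pf_size hp; have hb := pf_bnd hp; have hpos := pf_pos hp.
pose f := fun i : 'I_N.+1 => (inord (nth 0 w i).-1 : 'I_N.+1).
have finj : injective f.
  move=> i j /(congr1 val); rewrite /f /= !inordK; last 2 first.
  - have := hb j; lia.
  - have := hb i; lia.
  move=> e; apply/val_inj; apply: (pf_inj hp); rewrite ?ltn_ord //.
  rewrite -[val i]/(nat_of_ord i) -[val j]/(nat_of_ord j); move: e; have := hpos i (ltn_ord i); have := hpos j (ltn_ord j); lia.
exists (perm finj); apply: (@eq_from_nth _ 0); first by rewrite size_word hs.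
move=> i; rewrite size_word => hi.
have := word_nth (perm finj) (Ordinal hi); rewrite /= permE /f /= inordK.
  move=> ->; have := hpos i hi; lia.
have := hb i; lia.
Qed.

Lemma dum_eq N (s : 'S_N) : dumont1 s = dumB N (word s).
Proof.
apply/forallP/dumBP => H i.
- by move=> Hi; exact: (H (Ordinal Hi)).
- exact: (H i (ltn_ord i)).
Qed.

Lemma av_eq N (s : 'S_N) : avoids s pat123 = avB N (word s).
Proof.
rewrite /avoids; apply/idP/avBP.
- move=> Hav i j k ij jk kN a b; move/negP: Hav; apply.
  have hi : i < N by lia.
  have hj : j < N by lia.
  pose I := Ordinal hi; pose J := Ordinal hj; pose K := Ordinal kN.
  have a' : s I < s J by move: a; rewrite -[i]/(val I) -[j]/(val J) !word_nth.
  have b' : s J < s K by move: b; rewrite -[k]/(val K) -[j]/(val J) !word_nth.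
  apply/existsP; exists [ffun x : 'I_3 => nth I [:: I; J; K] x].
  apply/andP; split; apply/forallP => x; apply/forallP => y; rewrite !ffunE.
  + case: x => [[|[|[|x]]] hx] //=; case: y => [[|[|[|y]]] hy] //=; lia.
  + rewrite /pat123 !perm1.
    case: x => [[|[|[|x]]] hx] //=; case: y => [[|[|[|y]]] hy] //=; apply/eqP; lia.
- move=> H; apply/negP => /existsP[f /andP[/forallP inc /forallP iso]].
  pose o0 : 'I_3 := @Ordinal 3 0 isT.
  pose o1 : 'I_3 := @Ordinal 3 1 isT.
  pose o2 : 'I_3 := @Ordinal 3 2 isT.
  have i01 : f o0 < f o1 by move/forallP: (inc o0) => /(_ o1) /implyP; apply.
  have i12 : f o1 < f o2 by move/forallP: (inc o1) => /(_ o2) /implyP; apply.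
  have s01 : s (f o0) < s (f o1).
    by move/forallP: (iso o0) => /(_ o1); rewrite /pat123 !perm1 => /eqP ->.
  have s12 : s (f o1) < s (f o2).
    by move/forallP: (iso o1) => /(_ o2); rewrite /pat123 !perm1 => /eqP ->.
  apply: (H (f o0) (f o1) (f o2)) => //; rewrite ?word_nth //.
Qed.

Lemma card_gen N L : uniq L -> (forall w, valid N w = (w \in L)) ->
  #|[set s : 'S_N | dumont1 s && avoids s pat123]| = size L.
Proof.
move=> uL hL; set A := [set s : 'S_N | _].
have memA : forall s, (s \in A) = valid N (word s).
  by move=> s; rewrite inE dum_eq av_eq /valid word_perm.
rewrite cardE -(size_map (@word N)); apply: perm_size.
apply: uniq_perm; rewrite ?map_inj_uniq ?enum_uniq //; first exact: word_inj.
move=> w; apply/mapP/idP.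
- by case=> s; rewrite mem_enum memA => hs ->; rewrite -hL.
- rewrite -hL => hv; case/and3P: (hv) => hp _ _; have [s es] := word_surj hp.
  by exists s; rewrite // mem_enum memA es.
Qed.

Theorem theorem2p5 (n : nat) : 3 <= n -> #|D1_avoid123 n| = 4.
Proof.
move=> hn; rewrite /D1_avoid123 (@card_gen _ (Lr (n - 3))) ?Lr_size ?Lr_uniq //.
move=> w; rewrite -Lr_spec; congr valid; rewrite -muln2; lia.
Qed.
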